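(* Assume the standing setting described in the context. Let $(N_{1,n},V_{1,n})$ and $(N_{2,n},V_{2,n})$ be deterministic sequences of norms and polar angles, let $W_{1,n}:=V_{1,n}$, $W_{2,n}:=\pi-V_{2,n}$, and suppose $(N_{i,n},W_{i,n})\to\mathrm{Pole}_i$ for $i\in\{1,2\}$. Then, with $p(r,\varphi):=r(\cos\varphi,\sin\varphi)$ and $F_n:=W_{1,n}+W_{2,n}$, $$\big|p(N_{1,n},V_{1,n})-p(N_{2,n},V_{2,n})\big|=N_{1,n}+N_{2,n}-\frac a4F_n^2+\widetilde R_n,$$ where $\widetilde R_n=O(F_n^4)+A_n+B_n+C_n+D_n$ with $A_n=\frac14\big(\frac12F_n^2+O(F_n^4)\big)(a-N_{1,n})$, $B_n=\frac14\big(\frac12F_n^2+O(F_n^4)\big)(a-N_{2,n})$, $C_n=-\frac{a}{16}\big(\frac12F_n^2+O(F_n^4)\big)^2$, $D_n=O\Big((a-N_{1,n})^2+(a-N_{2,n})^2+\big(\frac12F_n^2+O(F_n^4)\big)^2\Big)$, as $n\to\infty$.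
   Context: Standing setting: $E\subset\mathbb{R}^2$ is compact, $a>0$, $\mathrm{diam}(E)=2a$, $\inf\{x:(x,y)\in E\}=-a$, $\sup\{x:(x,y)\in E\}=a$, and $E$ is the support of a Lebesgue density $f$ satisfying the paper's regularity assumptions near $(\pm a,0)$. $Q_1,\dots,Q_4$ are the open quadrants, $Q_1=\{x>0,y>0\}$, numbered anticlockwise, and $E_i:=E\cap Q_i$. Polar angles take values in $[0,2\pi)$. For $i\in\{1,2,3,4\}$, given sequences $N_{i,n}$ (norm) and $V_{i,n}$ (polar angle), set $W_{1,n}=V_{1,n}$, $W_{2,n}=\pi-V_{2,n}$, $W_{3,n}=V_{3,n}-\pi$, $W_{4,n}=2\pi-V_{4,n}$; one writes $(N_{i,n},W_{i,n})\to\mathrm{Pole}_i$ if $N_{i,n}\ge0$, $W_{i,n}\ge0$ for every $n$, the point $p(N_{i,n},V_{i,n})$ lies in $E_i$, and these points converge to $(a,0)$ if $i\in\{1,4\}$, resp. to $(-a,0)$ if $i\in\{2,3\}$. *)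

(* Defs.v *)
From HB Require Import structures.
From mathcomp Require Import all_boot all_order all_algebra.
From mathcomp Require Import all_classical all_reals all_analysis.
Set Implicit Arguments. Unset Strict Implicit. Unset Printing Implicit Defensive.
Import Order.TTheory GRing.Theory Num.Theory.
Import numFieldNormedType.Exports.
Local Open Scope classical_set_scope.
Local Open Scope ring_scope.

(* Euclidean distance on R^2 (note: the canonical norm on R*R in
   MathComp-Analysis is the max norm, so we write the Euclidean one out). *)
Definition eucl_dist {R : realType} (u v : R * R) : R :=
  Num.sqrt ((u.1 - v.1) ^+ 2 + (u.2 - v.2) ^+ 2).

Definition pp {R : realType} (r phi : R) : R * R := (r * cos phi, r * sin phi).

Definition diam {R : realType} (E : set (R * R)) : R :=
  sup [set d | exists u v, E u /\ E v /\ d = eucl_dist u v].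

Definition Quadrant {R : realType} (i : nat) : set (R * R) :=
  match i with
  | 1%N => [set u | 0 < u.1 /\ 0 < u.2]
  | 2%N => [set u | u.1 < 0 /\ 0 < u.2]
  | 3%N => [set u | u.1 < 0 /\ u.2 < 0]
  | _ => [set u | 0 < u.1 /\ u.2 < 0]
  end.

Definition Wof {R : realType} (i : nat) (v : R) : R :=
  match i with
  | 1%N => v
  | 2%N => pi - v
  | 3%N => v - pi
  | _ => 2 * pi - v
  end.

Definition pole_pt {R : realType} (i : nat) (a : R) : R * R :=
  match i with
  | 2%N | 3%N => (- a, 0)
  | _ => (a, 0)
  end.

Definition to_pole {R : realType} (E : set (R * R)) (a : R) (i : nat)
    (N V : nat -> R) : Prop :=
  (forall n, 0 <= N n /\ 0 <= Wof i (V n)) /\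
  (forall n, (E `&` Quadrant i) (pp (N n) (V n))) /\
  ((fun n => pp (N n) (V n)) @ \oo --> pole_pt i a).

(* Main.v *)
Require Import Defs.
From HB Require Import structures.
From mathcomp Require Import all_boot all_order all_algebra.
From mathcomp Require Import all_classical all_reals all_analysis.
From mathcomp Require Import ring lra.
Import Order.TTheory GRing.Theory Num.Theory.
Import numFieldNormedType.Exports.
Local Open Scope classical_set_scope.
Local Open Scope ring_scope.

Section Helpers.
Context {R : realType}.

Lemma mono0 (f df : R -> R) : (forall x : R, is_derive x (1:R) f (df x)) ->
  (forall x, 0 < x -> 0 <= df x) -> forall x, 0 <= x -> f 0 <= f x.
Proof.
move=> hd hdf x x0.
apply: (@ger0_derive1_ndecry R f 0 _ _ _ 0 x (lexx _) x0).
- by move=> y _; case: (hd y).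
- by move=> y; rewrite in_itv /= andbT => y0; rewrite derive1E; case: (hd y) => _ ->; apply: hdf.
- apply: continuous_subspaceT => y.
  by apply/differentiable_continuous/derivable1_diffP; case: (hd y).
Qed.

Lemma sin_le_id (x : R) : 0 <= x -> sin x <= x.
Proof.
move=> x0.
have := @mono0 (id - sin) (fun y => 1 - cos y) _ _ x x0.
rewrite !fctE /= sin0 subr0 subr_ge0; apply.
- by move=> y _; rewrite subr_ge0 cos_le1.
Qed.

Lemma cos_ge_taylor2 (x : R) : 0 <= x -> 1 - cos x <= x ^+ 2 / 2.
Proof.
move=> x0.
have hd : forall y : R, is_derive y (1:R) (2^-1 *: (id ^+ 2) + cos : R -> R) (y - sin y).
  move=> y; apply: is_derive_eq.
  by rewrite expr1 scalerA [_ *: 1]mulr1 mulrA mulVf ?mul1r ?pnatr_eq0.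
have := @mono0 _ _ hd _ x x0.
rewrite !fctE /= cos0 expr0n /= scaler0 add0r => H.
have H' : 1 <= 2^-1 * x^+2 + cos x.
  by apply: H => y y0; rewrite subr_ge0 sin_le_id // ltW.
lra.
Qed.

Lemma sin_ge_taylor3 (x : R) : 0 <= x -> x - x ^+ 3 / 6 <= sin x.
Proof.
move=> x0.
have hd : forall y : R, is_derive y (1:R) (sin - id + 6^-1 *: (id ^+ 3) : R -> R)
   (cos y - 1 + y ^+ 2 / 2).
  move=> y.
  have h1 := is_deriveB (is_derive_sin y) (is_derive_id y (1:R)).
  have h2 := is_deriveZ (6^-1) (is_deriveX 3 (is_derive_id y (1:R))).
  apply: is_derive_eq (is_deriveD h1 h2) _.
  by rewrite /GRing.scale /=; field.
have := @mono0 _ _ hd _ x x0.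
move=> H.
have H' : sin 0 - 0 + 6^-1 * 0^+3 <= sin x - x + 6^-1 * x^+3.
  apply: H => y y0; have := @cos_ge_taylor2 y (ltW y0); lra.
rewrite sin0 expr0n /= in H'; lra.
Qed.

Lemma cos_le_taylor4 (x : R) : 0 <= x -> x ^+ 2 / 2 - x ^+ 4 / 24 <= 1 - cos x.
Proof.
move=> x0.
have hd : forall y : R, is_derive y (1:R) (24^-1 *: (id ^+ 4) - 2^-1 *: (id ^+ 2) - cos : R -> R)
   (sin y - y + y ^+ 3 / 6).
  move=> y; apply: is_derive_eq.
  by rewrite /GRing.scale /=; field.
have := @mono0 _ _ hd _ x x0.
move=> H.
have H' : 24^-1 * 0^+4 - 2^-1 * 0^+2 - cos 0 <= 24^-1 * x^+4 - 2^-1 * x^+2 - cos x.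
  apply: H => y y0; have := @sin_ge_taylor3 y (ltW y0); lra.
rewrite cos0 !expr0n /= in H'; lra.
Qed.
Lemma sq_le (D X : R) : 0 <= X -> D ^+ 2 <= X ^+ 2 -> D <= X.
Proof. move=> X0 h; nra. Qed.

Lemma sqrt_step (S u x D : R) : 0 < S -> 0 <= u -> u <= x / 4 -> 0 <= D ->
  D ^+ 2 = S ^+ 2 * (1 - u) -> `|D - S * (1 - u / 2)| <= S * x ^+ 2.
Proof.
move=> S0 u0 ux D0 DE.
have x0 : 0 <= x by lra.
case: (lerP u 1) => u1.
  have h1 : D <= S * (1 - u / 2).
    have : D ^+ 2 <= (S * (1 - u / 2)) ^+ 2.
      rewrite DE; have : 0 <= S ^+ 2 * (u ^+ 2 / 4) by apply: mulr_ge0; [nra|nra].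
      move=> h; nra.
    by apply: sq_le; nra.
  have h2 : S * (1 - u / 2) - S * (u ^+ 2 / 2) <= D.
    have e : S * (1 - u / 2) - S * (u ^+ 2 / 2) = S * ((1 - u) * (1 + u / 2)) by field.
    rewrite e; case: (lerP (S * ((1 - u) * (1 + u / 2))) 0) => h; first lra.
    have : (S * ((1 - u) * (1 + u / 2))) ^+ 2 <= D ^+ 2.
      rewrite DE.
      have : S ^+ 2 * ((1 - u) * (u ^+ 2 * 3 / 4 + u ^+ 3 / 4)) >= 0.
        apply: mulr_ge0; first nra.
        apply: mulr_ge0; first lra. nra.
      move=> hh; nra.
    by apply: sq_le; nra.
  rewrite ler_norml; apply/andP; split; last nra.
  have : S * (u ^+ 2 / 2) <= S * x ^+ 2.
    apply: ler_wpM2l; [lra|]. nra.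
  lra.
have x4 : 4 < x by lra.
have DS : D <= S.
  have : D ^+ 2 <= S ^+ 2 by rewrite DE; nra.
  by apply: sq_le; lra.
have hx2 : 16 <= x ^+ 2 by nra.
have h1 : S * 16 <= S * x ^+ 2 by apply: ler_wpM2l; lra.
have h2 : S * (x / 8) <= S * x ^+ 2.
  apply: ler_wpM2l; [lra|]. nra.
have h3 : S * (1 - u / 2) <= S by nra.
have h4 : S * (1 - x / 8) <= S * (1 - u / 2) by apply: ler_wpM2l; lra.
rewrite ler_norml; apply/andP; split; nra.
Qed.


Lemma core (a N1 N2 c x D : R) : 0 < a -> `|a - N1| <= a / 4 -> `|a - N2| <= a / 4 ->
  0 <= x -> 0 <= c -> x / 2 - x ^+ 2 / 24 <= c -> c <= x / 2 -> 0 <= D ->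
  D ^+ 2 = (N1 + N2) ^+ 2 - 2 * (N1 * N2) * c ->
  `|D - (N1 + N2 - a / 4 * x + (0 + 4^-1 * (2^-1 * x + 0) * (a - N1)
        + 4^-1 * (2^-1 * x + 0) * (a - N2) - a / 16 * (2^-1 * x + 0) ^+ 2))|
  <= (16 * a + a^-1) * ((a - N1) ^+ 2 + (a - N2) ^+ 2 + (2^-1 * x + 0) ^+ 2).
Proof.
move=> a0 /ler_normlP[h1a h1b] /ler_normlP[h2a h2b] x0 c0 cl cu D0 DE.
set S := N1 + N2; set P := N1 * N2.
have S0 : 0 < S by rewrite /S; lra.
have SU : S <= 5 * a / 2 by rewrite /S; lra.
have SL : 3 * a / 2 <= S by rewrite /S; lra.
have P0 : 0 <= P by rewrite /P; nra.
have PS : 4 * P <= S ^+ 2 by rewrite /P /S; have := sqr_ge0 (N1 - N2); nra.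
have Sn0 : S != 0 by apply: lt0r_neq0.
set u := 2 * P * c / S ^+ 2.
have u0 : 0 <= u.
  rewrite /u; apply: divr_ge0; last by rewrite sqr_ge0.
  by apply: mulr_ge0 => //; apply: mulr_ge0 => //; lra.
have ux : u <= x / 4.
  rewrite /u ler_pdivrMr ?exprn_gt0 //. clear -P0 PS cu c0 x0; nra.
have DE' : D ^+ 2 = S ^+ 2 * (1 - u).
  by rewrite DE /u /S /P; field.
have B1 := @sqrt_step S u x D S0 u0 ux D0 DE'.
set k := (8 * S)^-1.
have k0 : 0 < k by rewrite /k invr_gt0; apply: mulr_gt0.
have kS : k * (8 * S) = 1 by rewrite /k mulVf // mulf_neq0.
set r := c - x / 2.
have iden : S * (1 - u / 2) - (N1 + N2 - a / 4 * x + (0 + 4^-1 * (2^-1 * x + 0) * (a - N1)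
        + 4^-1 * (2^-1 * x + 0) * (a - N2) - a / 16 * (2^-1 * x + 0) ^+ 2))
    = x * (N1 - N2) ^+ 2 * k + a * x ^+ 2 / 64 - 8 * P * r * k.
  by rewrite /u /k /r /S /P; field.
set ia := a^-1.
have ia0 : 0 < ia by rewrite /ia invr_gt0.
have iaa : ia * a = 1 by rewrite /ia mulVf // lt0r_neq0.
have kia : 12 * a * k <= 1 by clear -kS SL k0 a0; nra.
set E := (a - N1) ^+ 2 + (a - N2) ^+ 2.
have d2E : (N1 - N2) ^+ 2 <= 2 * E by rewrite /E; have := sqr_ge0 (2 * a - N1 - N2); clear; nra.
have d2a : (N1 - N2) ^+ 2 <= a ^+ 2 / 4.
  have h : N1 - N2 <= a / 2 by clear -h1a h1b h2a h2b; lra.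
  have h' : - (a / 2) <= N1 - N2 by clear -h1a h1b h2a h2b; lra.
  clear -h h'; nra.
have xq : x <= 1 + x ^+ 2 / 4 by have := sqr_ge0 (x - 2); clear; nra.
have t2a : 0 <= x * (N1 - N2) ^+ 2 * k by apply: mulr_ge0; [apply: mulr_ge0 => //; rewrite sqr_ge0 | exact: ltW k0].
have t2b : x * (N1 - N2) ^+ 2 * k <= (1 + x ^+ 2 / 4) * (N1 - N2) ^+ 2 * k.
  apply: ler_wpM2r; [exact: ltW k0|]. apply: ler_wpM2r; [exact: sqr_ge0 | exact: xq].
have E0 : 0 <= E by rewrite /E; apply: addr_ge0; apply: sqr_ge0.
have t2c : (N1 - N2) ^+ 2 * k <= E * ia / 6.
  have h0 : (N1 - N2) ^+ 2 * k <= 2 * E * k.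
    apply: ler_wpM2r; [exact: ltW k0 | exact: d2E].
  have e1 : 2 * E * k = E * ia / 6 * (12 * a * k).
    by rewrite /ia; field; rewrite ?lt0r_neq0.
  have e2 : E * ia / 6 * (12 * a * k) <= E * ia / 6.
    apply: ler_piMr; last exact: kia.
    apply: divr_ge0 => //.
    apply: mulr_ge0 => //; exact: ltW.
  clear -h0 e1 e2; lra.
have t2d : x ^+ 2 / 4 * (N1 - N2) ^+ 2 * k <= a * x ^+ 2 / 192.
  have x2 : 0 <= x ^+ 2 / 4 by apply: divr_ge0 => //; apply: sqr_ge0.
  have : x ^+ 2 / 4 * (N1 - N2) ^+ 2 * k <= x ^+ 2 / 4 * (a ^+ 2 / 4) * k.
    apply: ler_wpM2r; [exact: ltW k0|]; apply: ler_wpM2l => //.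
  have e1 : x ^+ 2 / 4 * (a ^+ 2 / 4) * k = (x ^+ 2 / 4 * (a / 48)) * (12 * a * k) by field.
  have e2 : (x ^+ 2 / 4 * (a / 48)) * (12 * a * k) <= x ^+ 2 / 4 * (a / 48).
    apply: ler_piMr; last exact: kia.
    apply: mulr_ge0 => //; apply: divr_ge0 => //; exact: ltW.
  clear -e1 e2; lra.
have rb : - (x ^+ 2 / 24) <= r <= 0 by rewrite /r; apply/andP; split; clear -cl cu; lra.
have q0 : 0 <= 8 * P * k by apply: mulr_ge0; [apply: mulr_ge0 => //| exact: ltW k0].
have qS : 8 * P * k <= S / 4.
  have -> : 8 * P * k = P / S by rewrite /k; field.
  rewrite ler_pdivrMr //; clear -PS; nra.
have t3 : `|8 * P * r * k| <= S * x ^+ 2 / 96.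
  have -> : 8 * P * r * k = (8 * P * k) * r by ring.
  have x2 : 0 <= x ^+ 2 by apply: sqr_ge0.
  case/andP: rb => rb1 rb2.
  have h1 : (8 * P * k) * r <= 0 by clear -q0 rb2; nra.
  have h2 : (8 * P * k) * (- (x ^+ 2 / 24)) <= (8 * P * k) * r by apply: ler_wpM2l.
  have h3 : (S / 4) * (x ^+ 2 / 24) >= (8 * P * k) * (x ^+ 2 / 24) by apply: ler_wpM2r; [apply: divr_ge0 | exact: qS].
  rewrite ler_norml; apply/andP; split; clear -h1 h2 h3; lra.
have tri : `|D - (N1 + N2 - a / 4 * x + (0 + 4^-1 * (2^-1 * x + 0) * (a - N1)
        + 4^-1 * (2^-1 * x + 0) * (a - N2) - a / 16 * (2^-1 * x + 0) ^+ 2))|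
   <= `|D - S * (1 - u / 2)| + (x * (N1 - N2) ^+ 2 * k + a * x ^+ 2 / 64 + `|8 * P * r * k|).
  have split_ : forall Tt, D - Tt = (D - S * (1 - u / 2)) + (S * (1 - u / 2) - Tt) by move=> Tt; ring.
  rewrite split_ iden.
  apply: (le_trans (ler_normD _ _)); apply: lerD => //.
  apply: (le_trans (ler_normB _ _)); apply: lerD => //.
  rewrite ger0_norm //; apply: addr_ge0 => //; apply: divr_ge0 => //; apply: mulr_ge0 => //; [exact: ltW a0|apply: sqr_ge0].
refine (le_trans tri _).
have x2 : 0 <= x ^+ 2 by apply: sqr_ge0.
have hS : S * x ^+ 2 <= 5 * a / 2 * x ^+ 2 by apply: ler_wpM2r.
have hE : 0 <= a * E by apply: mulr_ge0 => //; exact: ltW.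
have hx : 0 <= ia * x ^+ 2 by apply: mulr_ge0 => //; exact: ltW.
have eqK : (16 * a + ia) * (E + (2^-1 * x + 0) ^+ 2)
   = 16 * (a * E) + 4 * (a * x ^+ 2) + E * ia + ia * x ^+ 2 / 4.
  by rewrite /E /ia; field; rewrite ?lt0r_neq0.
rewrite eqK.
have hax : 0 <= a * x ^+ 2 by apply: mulr_ge0 => //; exact: ltW.
clear -B1 t2a t2b t2c t2d t3 hS hE hx hax x2; lra.
Qed.

Lemma near_norm (a b : R) (N V : nat -> R) : 0 < a -> `|b| = a ->
  (forall n, 0 <= N n) -> (fun n => pp (N n) (V n)) @ \oo --> (b, 0) ->
  \forall n \near \oo, `|a - N n| <= a / 4.
Proof.
move=> a0 ba N0 Hc.
have Hx : (fun n => N n * cos (V n)) @ \oo --> b.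
  exact: (cvg_comp _ _ Hc cvg_fst).
have Hy : (fun n => N n * sin (V n)) @ \oo --> (0:R).
  exact: (cvg_comp _ _ Hc cvg_snd).
have a8 : 0 < a / 8 by lra.
near=> n.
have hx : `|N n * cos (V n) - b| < a / 8 by near: n; exact: cvgr_distC_lt Hx _ a8.
have hy : `|N n * sin (V n)| < a / 8.
  by rewrite -[N n * _]subr0; near: n; exact: cvgr_distC_lt Hy _ a8.
have NE : N n ^+ 2 = (N n * cos (V n)) ^+ 2 + (N n * sin (V n)) ^+ 2.
  by rewrite !exprMn -mulrDr cos2Dsin2 mulr1.
move: NE hx hy; set X := N n * cos (V n); set Y := N n * sin (V n) => NE hx hy.
have hN := N0 n.
have X2l : 49 * a ^+ 2 / 64 < X ^+ 2.
  move: hx; rewrite ltr_norml => /andP[h1 h2].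
  case: (lerP 0 b) => hb.
    rewrite ger0_norm // in ba; subst b; nra.
  rewrite ltr0_norm // in ba; have eb : b = - a by lra.
  subst b; nra.
have X2u : X ^+ 2 < 81 * a ^+ 2 / 64.
  move: hx; rewrite ltr_norml => /andP[h1 h2].
  case: (lerP 0 b) => hb.
    rewrite ger0_norm // in ba; subst b; nra.
  rewrite ltr0_norm // in ba; have eb : b = - a by lra.
  subst b; nra.
have Y2 : Y ^+ 2 < a ^+ 2 / 64.
  move: hy; rewrite ltr_norml => /andP[h1 h2]; nra.
rewrite ler_norml; apply/andP; split; nra.
Unshelve. all: end_near. Qed.

End Helpers.

Theorem lemma4 (R : realType) (E : set (R * R)) (a : R)
  (N1 V1 N2 V2 : nat -> R) :
  compact E -> 0 < a -> diam E = 2 * a ->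
  inf [set x | exists y, E (x, y)] = - a ->
  sup [set x | exists y, E (x, y)] = a ->
  (forall n, 0 <= V1 n < 2 * pi) -> (forall n, 0 <= V2 n < 2 * pi) ->
  to_pole E a 1 N1 V1 -> to_pole E a 2 N2 V2 ->
  let F := fun n => Wof 1 (V1 n) + Wof 2 (V2 n) in
  exists (g0 g1 g2 g3 g4 : nat -> R) (h : nat -> R),
    [/\ g0 =O_\oo (fun n => F n ^+ 4) /\ g1 =O_\oo (fun n => F n ^+ 4),
        g2 =O_\oo (fun n => F n ^+ 4) /\ g3 =O_\oo (fun n => F n ^+ 4),
        g4 =O_\oo (fun n => F n ^+ 4),
        h =O_\oo (fun n => (a - N1 n) ^+ 2 + (a - N2 n) ^+ 2
                           + (2^-1 * F n ^+ 2 + g4 n) ^+ 2) &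
        forall n,
          eucl_dist (pp (N1 n) (V1 n)) (pp (N2 n) (V2 n))
          = N1 n + N2 n - a / 4 * F n ^+ 2
            + (g0 n
               + 4^-1 * (2^-1 * F n ^+ 2 + g1 n) * (a - N1 n)
               + 4^-1 * (2^-1 * F n ^+ 2 + g2 n) * (a - N2 n)
               - a / 16 * (2^-1 * F n ^+ 2 + g3 n) ^+ 2
               + h n)].
Proof.
move=> cE a0 dE iE sE V1b V2b H1 H2 F.
case: H1 => H1n [_ H1c]; case: H2 => H2n [_ H2c].
have ev1 := near_norm a a N1 V1 a0 (gtr0_norm a0) (fun n => (H1n n).1) H1c.
have ev2 : \forall n \near \oo, `|a - N2 n| <= a / 4.
  apply: (near_norm a (- a) N2 V2 a0 _ (fun n => (H2n n).1) H2c).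
  by rewrite normrN gtr0_norm.
pose T n := N1 n + N2 n - a / 4 * F n ^+ 2
            + (0 + 4^-1 * (2^-1 * F n ^+ 2 + 0) * (a - N1 n)
               + 4^-1 * (2^-1 * F n ^+ 2 + 0) * (a - N2 n)
               - a / 16 * (2^-1 * F n ^+ 2 + 0) ^+ 2).
pose h n := eucl_dist (pp (N1 n) (V1 n)) (pp (N2 n) (V2 n)) - T n.
have O0 : (fun _ : nat => (0 : R)) =O_\oo (fun n => F n ^+ 4).
  apply/eqO_exP; exists 1 => //; apply: nearW => n.
  by rewrite normr0 mul1r normr_ge0.
exists (fun=> 0), (fun=> 0), (fun=> 0), (fun=> 0), (fun=> 0), h.
split => //.
- apply/eqO_exP; exists (16 * a + a^-1).
    by apply: ltr_wpDr; [rewrite invr_ge0 ltW | rewrite mulr_gt0].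
  near=> n.
  have e1 : `|a - N1 n| <= a / 4 by near: n; exact: ev1.
  have e2 : `|a - N2 n| <= a / 4 by near: n; exact: ev2.
  have M0 : 0 <= (a - N1 n) ^+ 2 + (a - N2 n) ^+ 2 + (2^-1 * F n ^+ 2 + 0) ^+ 2.
    by rewrite !addr_ge0 ?sqr_ge0.
  rewrite /= (ger0_norm M0) /h.
  have F0 : 0 <= F n.
    rewrite /F; apply: addr_ge0; [exact: (H1n n).2 | exact: (H2n n).2].
  have eF : cos (F n) = - (cos (V1 n) * cos (V2 n) + sin (V1 n) * sin (V2 n)).
    rewrite /F /= (_ : V1 n + (pi - V2 n) = (V1 n - V2 n) + pi); last by ring.
    by rewrite (cosDpi (V1 n - V2 n)) cosB.
  have c1 := cos2Dsin2 (V1 n); have c2 := cos2Dsin2 (V2 n).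
  have cc0 : 0 <= 1 - cos (F n) by rewrite subr_ge0 cos_le1.
  have ccl : F n ^+ 2 / 2 - (F n ^+ 2) ^+ 2 / 24 <= 1 - cos (F n).
    by rewrite -exprM /=; exact: cos_le_taylor4.
  have ccu : 1 - cos (F n) <= F n ^+ 2 / 2 by exact: cos_ge_taylor2.
  have DE : eucl_dist (pp (N1 n) (V1 n)) (pp (N2 n) (V2 n)) ^+ 2
      = (N1 n + N2 n) ^+ 2 - 2 * (N1 n * N2 n) * (1 - cos (F n)).
    rewrite /eucl_dist sqr_sqrtr ?addr_ge0 ?sqr_ge0 //= eF.
    transitivity (N1 n ^+ 2 * (cos (V1 n) ^+ 2 + sin (V1 n) ^+ 2)
      + N2 n ^+ 2 * (cos (V2 n) ^+ 2 + sin (V2 n) ^+ 2)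
      - 2 * (N1 n * N2 n) * (cos (V1 n) * cos (V2 n) + sin (V1 n) * sin (V2 n))); first by ring.
    by rewrite c1 c2; ring.
  rewrite /T; exact: (core _ _ _ _ _ _ a0 e1 e2 (sqr_ge0 _) cc0 ccl ccu (sqrtr_ge0 _) DE).
- move=> n; rewrite /h /T /=; ring.
Unshelve. all: end_near. Qed.
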